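(* For every integer $d\ge2$, the degree map $\deg:[\mathbf{P}^1,\mathbf{P}^d]^{\mathrm{N}}\to\mathbf{N}$ is a bijection.
   Context: Let $k$ be a field and $d\ge2$. For $n\ge0$ and a $k$-algebra $R$, $\mathcal{F}^d_n(R)$ is the set of pairs $(A,B)$ where $A\in R[X]$ is monic of degree $n$ and $B=(B_1,\dots,B_d)$ is a $d$-tuple of polynomials of degree $<n$ such that $A,B_1,\dots,B_d$ generate the unit ideal of $R[X]$. Pointed scheme morphisms $\mathbf{P}^1_k\to\mathbf{P}^d_k$ (base points $\infty=[1:0]$ and $[1:0:\dots:0]$) correspond to pairs ($n$, element of $\mathcal{F}^d_n(k)$), $n$ being the degree; pointed naive homotopies $\mathbf{P}^1\times\mathbf{A}^1\to\mathbf{P}^d$ correspond to elements of $\mathcal{F}^d_n(k[T])$, with source and target obtained by evaluating at $T=0$ and $T=1$. $[\mathbf{P}^1,\mathbf{P}^d]^{\mathrm{N}}$ is the set of pointed morphisms modulo the equivalence relation generated by pointed naive homotopies. *)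

(* Defs.v *)
From HB Require Import structures.
From mathcomp Require Import all_boot all_order all_algebra.
From Stdlib Require Import Relations.
Set Implicit Arguments. Unset Strict Implicit. Unset Printing Implicit Defensive.
Import GRing.Theory.
Local Open Scope ring_scope.

Definition inF (d n : nat) (R : comNzRingType) (A : {poly R})
  (B : 'I_d -> {poly R}) : Prop :=
  [/\ A \is monic, size A = n.+1, (forall i, (size (B i) <= n)%N) &
      exists (U : {poly R}) (V : 'I_d -> {poly R}),
        U * A + \sum_(i < d) V i * B i = 1].

(* Pointed morphisms P^1 -> P^d over k: a degree n and an element of F^d_n(k). *)
Record ptmap (k : fieldType) (d : nat) := PtMap {
  pm_deg : nat;
  pm_A : {poly k};
  pm_B : 'I_d -> {poly k};
  pm_ok : inF pm_deg pm_A pm_B }.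

Definition evT (k : fieldType) (t : k) (P : {poly {poly k}}) : {poly k} :=
  map_poly (fun c : {poly k} => c.[t]) P.

Definition naive_htpy (k : fieldType) (d : nat) (f g : ptmap k d) : Prop :=
  exists (n : nat) (HA : {poly {poly k}}) (HB : 'I_d -> {poly {poly k}}),
    [/\ inF n HA HB,
        pm_deg f = n /\ pm_A f = evT 0 HA /\ (forall i, pm_B f i = evT 0 (HB i))
      & pm_deg g = n /\ pm_A g = evT 1 HA /\ (forall i, pm_B g i = evT 1 (HB i))].

(* the equivalence relation generated by pointed naive homotopies;
   [P^1, P^d]^N is ptmap k d modulo this relation *)
Definition naive_equiv (k : fieldType) (d : nat) : relation (ptmap k d) :=
  clos_refl_sym_trans (ptmap k d) (@naive_htpy k d).

(* Main.v *)
Require Import Defs.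
From mathcomp Require Import all_boot all_order all_algebra zify.
From Stdlib Require Import Relations.
Set Implicit Arguments. Unset Strict Implicit. Unset Printing Implicit Defensive.
Import GRing.Theory.
Local Open Scope ring_scope.

Definition unimod (R : comNzRingType) d (A : {poly R}) (B : 'I_d -> {poly R}) :=
  exists (U : {poly R}) (V : 'I_d -> {poly R}), U * A + \sum_(i < d) V i * B i = 1.

Definition inI (R : comNzRingType) d (A : {poly R}) (B : 'I_d -> {poly R}) x :=
  exists (a0 : {poly R}) (a : 'I_d -> {poly R}), x = a0 * A + \sum_(i < d) a i * B i.

Lemma inI0 (R : comNzRingType) d (A : {poly R}) (B : 'I_d -> {poly R}) : inI A B 0.
Proof. exists 0, (fun _ => 0); rewrite mul0r add0r big1 // => i _; exact: mul0r. Qed.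

Lemma inID (R : comNzRingType) d (A : {poly R}) (B : 'I_d -> {poly R}) x y :
  inI A B x -> inI A B y -> inI A B (x + y).
Proof.
move=> [a0 [a ->]] [b0 [b ->]]; exists (a0 + b0), (fun i => a i + b i).
rewrite mulrDl.
under [X in _ = _ + X]eq_bigr => i _ do rewrite mulrDl.
rewrite big_split /=.
by rewrite -!addrA; congr (_ + _); rewrite addrCA.
Qed.

Lemma inIM (R : comNzRingType) d (A : {poly R}) (B : 'I_d -> {poly R}) r x :
  inI A B x -> inI A B (r * x).
Proof.
move=> [a0 [a ->]]; exists (r * a0), (fun i => r * a i).
rewrite mulrDr mulr_sumr mulrA; congr (_ + _); apply: eq_bigr => i _; exact: mulrA.
Qed.

Lemma inIA (R : comNzRingType) d (A : {poly R}) (B : 'I_d -> {poly R}) : inI A B A.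
Proof. exists 1, (fun _ => 0); rewrite mul1r big1 ?addr0 // => i _; exact: mul0r. Qed.

Lemma inIB (R : comNzRingType) d (A : {poly R}) (B : 'I_d -> {poly R}) j : inI A B (B j).
Proof.
exists 0, (fun i => if i == j then 1 else 0); rewrite mul0r add0r (bigD1 j) //= eqxx mul1r.
rewrite big1 ?addr0 // => i /negbTE ->; exact: mul0r.
Qed.

Lemma unimod_sub (R : comNzRingType) d (A : {poly R}) (B : 'I_d -> {poly R}) d'
  (A' : {poly R}) (B' : 'I_d' -> {poly R}) :
  unimod A B -> inI A' B' A -> (forall i, inI A' B' (B i)) -> unimod A' B'.
Proof.
move=> [U [V E]] hA hB.
have : inI A' B' 1.
  rewrite -E; apply: inID; first exact: inIM.
  by elim/big_ind: _ => //; [exact: inI0 | exact: inID | move=> i _; exact: inIM].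
by move=> [a0 [a e]]; exists a0, a; rewrite -e.
Qed.

Lemma unimod_unit (R : comNzRingType) d (A : {poly R}) (B : 'I_d -> {poly R}) m :
  B m = 1 -> unimod A B.
Proof.
move=> Bm; have [a0 [a e]] := inIB A B m; exists a0, a; by rewrite -e.
Qed.

Lemma unimod_map (R S : comNzRingType) (f : {rmorphism R -> S}) d (A : {poly R})
  (B : 'I_d -> {poly R}) :
  unimod A B -> unimod (map_poly f A) (fun i => map_poly f (B i)).
Proof.
move=> [U [V E]]; exists (map_poly f U), (fun i => map_poly f (V i)).
rewrite -rmorphM.
under eq_bigr => i _ do rewrite -rmorphM.
by rewrite -rmorph_sum -rmorphD E rmorph1.
Qed.

Definition Cp (k : fieldType) (p : {poly k}) : {poly {poly k}} := p ^:P.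
Definition Tc (k : fieldType) : {poly {poly k}} := ('X)%:P.
Definition lineP (k : fieldType) (p q : {poly k}) : {poly {poly k}} :=
  Cp p + Tc k * Cp (q - p).

Lemma evT_rm (k : fieldType) (t : k) P : evT t P = map_poly (horner_eval t) P.
Proof. by []. Qed.

Lemma evT_line (k : fieldType) (t : k) (p q : {poly k}) : evT t (lineP p q) = p + t%:P * (q - p).
Proof.
rewrite evT_rm /lineP /Cp /Tc rmorphD rmorphM /= !map_polyC /= horner_evalE hornerX.
by rewrite -!map_poly_comp !map_poly_id // => x _ /=; rewrite horner_evalE hornerC.
Qed.

Lemma evT_line0 (k : fieldType) (p q : {poly k}) : evT 0 (lineP p q) = p.
Proof. by rewrite evT_line mul0r addr0. Qed.
Lemma evT_line1 (k : fieldType) (p q : {poly k}) : evT 1 (lineP p q) = q.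
Proof. by rewrite evT_line mul1r addrC subrK. Qed.

Lemma size_line (k : fieldType) (p q : {poly k}) n :
  (size p <= n)%N -> (size q <= n)%N -> (size (lineP p q) <= n)%N.
Proof.
move=> hp hq; rewrite /lineP; apply: leq_trans (size_polyD _ _) _.
rewrite geq_max /Cp size_map_polyC hp /=.
apply: leq_trans (size_polyMleq _ _) _.
  have hqp : (size (q - p)%R <= n)%N.
    by apply: leq_trans (size_polyD _ _) _; rewrite size_polyN geq_max hp hq.
  rewrite size_polyC size_map_polyC; case: eqP => _ /=; rewrite ?add0n ?add1n //.
  exact: leq_trans (leq_pred _) hqp.
Qed.

Lemma size_sub_monic (k : fieldType) (p q : {poly k}) n :
  p \is monic -> q \is monic -> size p = n.+1 -> size q = n.+1 -> (size (q - p)%R <= n)%N.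
Proof.
move=> mp mq sp sq; apply/leq_sizeP => j hj; rewrite coefB.
move: hj; rewrite leq_eqVlt => /orP [/eqP <-| hj].
  by move: mp mq; rewrite !monicE /lead_coef sp sq /= => /eqP -> /eqP ->; rewrite subrr.
by rewrite !nth_default ?subr0 // ?sp ?sq.
Qed.

Lemma monic_line (k : fieldType) (p q : {poly k}) n :
  p \is monic -> q \is monic -> size p = n.+1 -> size q = n.+1 ->
  lineP p q \is monic /\ size (lineP p q) = n.+1.
Proof.
move=> mp mq sp sq.
have hs : (size (Tc k * Cp (q - p))%R < size (Cp p))%N.
  rewrite /Cp size_map_polyC sp ltnS.
  apply: leq_trans (size_polyMleq _ _) _.
  have h := size_sub_monic mp mq sp sq.
  rewrite size_polyC size_map_polyC; case: eqP => _ /=; rewrite ?add0n ?add1n //.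
  exact: leq_trans (leq_pred _) h.
split; last by rewrite /lineP size_addl // /Cp size_map_polyC.
rewrite monicE /lineP lead_coefDl //.
by rewrite /Cp lead_coef_map /= (monicP mp).
Qed.

Lemma line_htpy (k : fieldType) d (f g : ptmap k d) n :
  pm_deg f = n -> pm_deg g = n ->
  unimod (lineP (pm_A f) (pm_A g)) (fun i => lineP (pm_B f i) (pm_B g i)) ->
  naive_htpy f g.
Proof.
case: f => nf Af Bf [mf sf bf uf]; case: g => ng Ag Bg [mg sg bg ug] /= ef eg U.
subst nf ng.
exists n, (lineP Af Ag), (fun i => lineP (Bf i) (Bg i)); split.
- have [m s] := monic_line mf mg sf sg.
  split => // i; exact: size_line.
- by split => //; split => [|i]; rewrite evT_line0.
- by split => //; split => [|i]; rewrite evT_line1.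
Qed.

Lemma lineP_same (k : fieldType) (p : {poly k}) : lineP p p = Cp p.
Proof. by rewrite /lineP subrr /Cp rmorph0 mulr0 addr0. Qed.

Lemma lineP_add (k : fieldType) (p x : {poly k}) : lineP p (p + x) = Cp p + Tc k * Cp x.
Proof. by rewrite /lineP (addrC p) addrK. Qed.

Lemma inIsub (R : comNzRingType) d (A : {poly R}) (B : 'I_d -> {poly R}) x y :
  inI A B x -> inI A B y -> inI A B (x - y).
Proof. move=> hx hy; apply: inID => //; rewrite -mulN1r; exact: inIM. Qed.

Lemma unimod_C (k : fieldType) d (A : {poly k}) (B : 'I_d -> {poly k}) :
  unimod A B -> unimod (Cp A) (fun i => Cp (B i)).
Proof. exact: (@unimod_map _ _ polyC). Qed.

Definition upd (k : fieldType) d (B : 'I_d -> {poly k}) (j : 'I_d) (x : {poly k}) :=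
  fun l => if l == j then x else B l.

Lemma elem_step (k : fieldType) d (f : ptmap k d) (i j : 'I_d) (c : {poly k}) :
  i != j -> (size (pm_B f j + c * pm_B f i)%R <= pm_deg f)%N ->
  exists g : ptmap k d, [/\ naive_equiv f g, pm_deg g = pm_deg f, pm_A g = pm_A f &
     pm_B g = upd (pm_B f) j (pm_B f j + c * pm_B f i)].
Proof.
case: f => n A B [mA sA sB uAB] /= nij hs.
set B' := upd B j (B j + c * B i).
have B'i : B' i = B i by rewrite /B' /upd (negbTE nij).
have B'j : B' j = B j + c * B i by rewrite /B' /upd eqxx.
have okg : inF n A B'.
  split => // [l|].
    by rewrite /B' /upd; case: eqP.
  apply: (unimod_sub uAB); first exact: inIA.
  move=> l; case: (eqVneq l j) => [->|nlj].
    have -> : B j = B' j - c * B' i by rewrite B'i B'j addrK.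
    apply: inIsub; first exact: inIB.
    by apply: inIM; exact: inIB.
  have -> : B l = B' l by rewrite /B' /upd (negbTE nlj).
  exact: inIB.
exists (PtMap okg); split => //.
apply: rst_step; apply: (line_htpy (n:=n)) => //=.
rewrite lineP_same.
apply: (unimod_sub (unimod_C uAB)); first exact: inIA.
move=> l; case: (eqVneq l j) => [->|nlj].
  have -> : Cp (B j) = lineP (B j) (B' j) - Tc k * Cp c * lineP (B i) (B' i).
    by rewrite B'i B'j lineP_add lineP_same /Cp rmorphM /= mulrA addrK.
  apply: inIsub; first exact: (inIB _ (fun l => lineP (B l) (B' l)) j).
  by apply: inIM; exact: (inIB _ (fun l => lineP (B l) (B' l)) i).
have -> : Cp (B l) = lineP (B l) (B' l) by rewrite /B' /upd (negbTE nlj) lineP_same.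
exact: (inIB _ (fun l => lineP (B l) (B' l)) l).
Qed.

Lemma pm_size (k : fieldType) d (f : ptmap k d) l : (size (pm_B f l) <= pm_deg f)%N.
Proof. by case: f => n A B [? ? h ?]. Qed.

Lemma modE (k : fieldType) (p q : {poly k}) : p + - (p %/ q) * q = p %% q.
Proof. by rewrite {1}(divp_eq p q) mulNr addrAC subrr add0r. Qed.

Lemma euclid (k : fieldType) d (i j : 'I_d) : i != j -> forall m (f : ptmap k d),
  (size (pm_B f i) + size (pm_B f j) <= m)%N ->
  exists g : ptmap k d, [/\ naive_equiv f g, pm_deg g = pm_deg f, pm_A g = pm_A f,
     pm_B g j = 0 & forall l, l != i -> l != j -> pm_B g l = pm_B f l].
Proof.
move=> nij m; elim: m => [|m IH] f hm.
  exists f; split => //; first exact: rst_refl.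
  by apply/eqP; rewrite -size_poly_eq0 -leqn0 (leq_trans _ hm) // leq_addl.
have nji : j != i by rewrite eq_sym.
have [Bj0|Bjn0] := eqVneq (pm_B f j) 0.
  by exists f; split => //; exact: rst_refl.
have [Bi0|Bin0] := eqVneq (pm_B f i) 0.
  destruct (@elem_step k d f j i 1 nji) as [f1 [e1 d1 a1 b1]].
    by rewrite mul1r Bi0 add0r pm_size.
  destruct (@elem_step k d f1 i j (-1) nij) as [f2 [e2 d2 a2 b2]].
    rewrite b1 /upd eqxx (negbTE nji) Bi0 add0r mul1r mulN1r subrr size_poly0.
    exact: leq0n.
  exists f2; split.
  - exact: rst_trans e1 e2.
  - by rewrite d2 d1.
  - by rewrite a2 a1.
  - by rewrite b2 b1 /upd !eqxx (negbTE nji) Bi0 add0r mul1r mulN1r subrr.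
  - by move=> l li lj; rewrite b2 b1 /upd (negbTE lj) (negbTE li).
have [hle|hlt] := leqP (size (pm_B f j)) (size (pm_B f i)).
  destruct (@elem_step k d f j i (- (pm_B f i %/ pm_B f j)) nji) as [f1 [e1 d1 a1 b1]].
    rewrite modE.
        exact: leq_trans (ltnW (ltn_modpN0 _ Bjn0)) (pm_size _ _).
  destruct (IH f1) as [g [eg dg ag bg og]]; last first.
    exists g; split.
    - exact: rst_trans e1 eg.
    - by rewrite dg d1.
    - by rewrite ag a1.
    - exact: bg.
    - by move=> l li lj; rewrite og // b1 /upd (negbTE li).
  rewrite b1 /upd eqxx (negbTE nji).
  rewrite modE.
    rewrite -ltnS; apply: leq_trans hm; rewrite -addSn leq_add2r; exact: leq_trans (ltn_modpN0 _ Bjn0) hle.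
destruct (@elem_step k d f i j (- (pm_B f j %/ pm_B f i)) nij) as [f1 [e1 d1 a1 b1]].
  rewrite modE.
    exact: leq_trans (ltnW (ltn_modpN0 _ Bin0)) (pm_size _ _).
destruct (IH f1) as [g [eg dg ag bg og]]; last first.
  exists g; split.
  - exact: rst_trans e1 eg.
  - by rewrite dg d1.
  - by rewrite ag a1.
  - exact: bg.
  - by move=> l li lj; rewrite og // b1 /upd (negbTE lj).
rewrite b1 /upd eqxx (negbTE nij).
rewrite modE.
rewrite -ltnS; apply: leq_trans hm; rewrite -addnS leq_add2l; exact: leq_trans (ltn_modpN0 _ Bin0) (ltnW hlt).
Qed.

Definition stdB (k : fieldType) d (i1 : 'I_d) : 'I_d -> {poly k} :=
  fun l => if l == i1 then 1 else 0.

Lemma std_ok (k : fieldType) d (i1 : 'I_d) n : (0 < n)%N -> inF n ('X^n : {poly k}) (stdB k i1).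
Proof.
move=> n0; split.
- exact: monicXn.
- exact: size_polyXn.
- by move=> l; rewrite /stdB; case: eqP => _; rewrite ?size_poly1 ?size_poly0.
- by apply: (@unimod_unit _ _ _ _ i1); rewrite /stdB eqxx.
Qed.

Lemma to_std (k : fieldType) d (i0 i1 : 'I_d) : i0 != i1 ->
  forall (f g : ptmap k d), (0 < pm_deg f)%N -> pm_deg g = pm_deg f ->
  pm_A g = 'X^(pm_deg f) -> pm_B g = stdB k i1 -> naive_equiv f g.
Proof.
move=> n01 f g n0 dg ag bg.
have [f1 [e1 d1 a1 b1 o1]] := @euclid k d i0 i1 n01 _ f (leqnn _).
set n := pm_deg f in n0 dg ag d1.
set B2 := upd (pm_B f1) i1 1.
have ok2 : inF n (pm_A f1) B2.
  case: (pm_ok f1) => m s _ _; rewrite d1 in s; split => //.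
    move=> l; rewrite /B2 /upd; case: eqP => _; first by rewrite size_poly1.
    by rewrite -d1; exact: pm_size.
  by apply: (@unimod_unit _ _ _ _ i1); rewrite /B2 /upd eqxx.
apply: rst_trans e1 _.
apply: (@rst_trans _ _ _ (PtMap ok2)).
  apply: rst_step; apply: (line_htpy (n:=n)) => //=.
  rewrite lineP_same.
  case: (pm_ok f1) => _ _ _ u1.
  apply: (unimod_sub (unimod_C u1)); first exact: inIA.
  move=> l; case: (eqVneq l i1) => [->|nl].
    by rewrite b1 /Cp rmorph0; exact: inI0.
  have -> : Cp (pm_B f1 l) = lineP (pm_B f1 l) (B2 l) by rewrite /B2 /upd (negbTE nl) lineP_same.
  exact: (inIB _ (fun l => lineP (pm_B f1 l) (B2 l)) l).
apply: rst_step; apply: (line_htpy (n:=n)) => //=.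
apply: (@unimod_unit _ _ _ _ i1).
by rewrite bg /B2 /upd /stdB eqxx lineP_same /Cp rmorph1.
Qed.

Lemma deg0_equiv (k : fieldType) d (f g : ptmap k d) : pm_deg f = 0%N -> pm_deg g = 0%N ->
  naive_equiv f g.
Proof.
move=> df dg; apply: rst_step; apply: (line_htpy (n:=0)) => //.
have A1 : forall h : ptmap k d, pm_deg h = 0%N -> pm_A h = 1.
  move=> h dh; case: (pm_ok h) => m s _ _; rewrite dh in s.
  rewrite (size1_polyC (eq_leq s)); congr (_%:P).
  by move: m; rewrite monicE /lead_coef s => /eqP.
rewrite (A1 f df) (A1 g dg) lineP_same /Cp rmorph1.
exists 1, (fun _ => 0); rewrite mul1r big1 ?addr0 // => i _; exact: mul0r.
Qed.

Theorem theorem4p12 (k : fieldType) (d : nat) (hd : (2 <= d)%N) :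
  (forall f g : ptmap k d, naive_equiv f g -> pm_deg f = pm_deg g) /\
  (forall f g : ptmap k d, pm_deg f = pm_deg g -> naive_equiv f g) /\
  (forall n : nat, exists f : ptmap k d, pm_deg f = n).
Proof.
have h0 : (0 < d)%N by apply: leq_trans hd.
pose i0 : 'I_d := Ordinal h0.
pose i1 : 'I_d := Ordinal hd.
have n01 : i0 != i1 by [].
have ex : forall n : nat, exists f : ptmap k d, pm_deg f = n.
  case=> [|n].
    have ok : inF 0 (1 : {poly k}) (fun _ : 'I_d => 0).
      split; [exact: monic1 | exact: size_poly1 | by move=> l; rewrite size_poly0 | ].
      exists 1, (fun _ => 0); rewrite mul1r big1 ?addr0 // => i _; exact: mul0r.
    by exists (PtMap ok).
  by exists (PtMap (std_ok k i1 (ltn0Sn n))).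
split; last split => //.
  move=> f g; elim => {f g} [f g [n [HA [HB [_ [-> _] [-> _]]]]]| | f g _ ->| f g h _ -> _ ->] //.
move=> f g dfg.
case: (posnP (pm_deg f)) => [f0|fpos].
  by apply: deg0_equiv => //; rewrite -dfg.
have ok := std_ok k i1 fpos.
apply: (@rst_trans _ _ _ (PtMap ok)).
  exact: (to_std n01).
apply: rst_sym; apply: (to_std n01) => //=; by rewrite -dfg.
Qed.
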